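(* Let $(\delta_\nu)_{\nu\geqslant 0}$ be a sequence of positive numbers with $\delta_\nu\to 0$. Suppose $(n_\nu)_{\nu\geqslant 0}$ is a strictly increasing sequence of positive integers and $(a_\nu)_{\nu\geqslant 0}$ a sequence of integers with $1\leqslant a_\nu<F_{n_\nu}$ and $\gcd(a_\nu,F_{n_\nu})=1$, such that, writing $$\alpha_\nu=\frac{a_\nu}{F_{n_\nu}},\quad \beta_\nu=\left\{\frac{F_{n_\nu-1}a_\nu}{F_{n_\nu}}\right\},\quad I_\nu=\left[\alpha_\nu,\alpha_\nu+\frac{\delta_\nu}{F_{n_\nu}^2}\right],\quad J_\nu=\left[\beta_\nu,\beta_\nu+\frac{\delta_\nu}{F_{n_\nu}^2}\right],$$ one has $I_{\nu+1}\subset I_\nu$ and $J_{\nu+1}\subset J_\nu$ for all $\nu$. Let $\alpha$ and $\beta$ be the real numbers with $\{\alpha\}=\bigcap_\nu I_\nu$ and $\{\beta\}=\bigcap_\nu J_\nu$ (as sets). Then $$\limsup_{Q\to\infty}\, Q\left(\min_{x\in\mathbb{Z},\,1\leqslant x<Q}\|\alpha x\|\cdot\|\beta x\|\right)\geqslant \frac{2}{3+\sqrt5}=0.381966\ldots$$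
   Context: $F_n$ denotes the $n$-th Fibonacci number ($F_1=F_2=1$, $F_{n+1}=F_n+F_{n-1}$). For a real $t$, $\{t\}$ is its fractional part and $\|t\|$ is the distance from $t$ to the nearest integer. (Such sequences exist: they are built inductively, choosing $n_{\nu+1}$ large enough and $a_{\nu+1}$ so that the nested-interval conditions hold.) *)

(* Defs.v *)
From Stdlib Require Import Reals Lra Lia ZArith List.
From Coquelicot Require Import Coquelicot.
Open Scope R_scope.

Fixpoint fib (n : nat) : nat :=
  match n with
  | O => O
  | S m => match m with
           | O => 1%nat
           | S k => (fib m + fib k)%nat
           end
  end.

Definition frac (t : R) : R := t - IZR (Int_part t).

Definition dist_Z (t : R) : R := Rmin (frac t) (1 - frac t).

(* min_{x in Z, 1 <= x < Q} ||alpha x|| * ||beta x||.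
   For Q <= 1 the range is empty; we then return the x = 1 value
   (irrelevant for the limsup, which ignores finitely many terms). *)
Definition prod_dist (alpha beta : R) (x : nat) : R :=
  dist_Z (alpha * INR x) * dist_Z (beta * INR x).

Definition min_prod (alpha beta : R) (Q : nat) : R :=
  fold_right Rmin (prod_dist alpha beta 1) (map (prod_dist alpha beta) (seq 1 (Q - 1))).

Definition in_Icc (c l x : R) : Prop := c <= x <= c + l.

(* Main.v *)
Require Import Defs.
From Stdlib Require Import Reals Lra Lia ZArith List Znumtheory Psatz.
From Coquelicot Require Import Coquelicot.
Open Scope R_scope.

Definition fz (k : nat) : Z := Z.of_nat (fib k).

Lemma fz_rec k : fz (S (S k)) = (fz (S k) + fz k)%Z.
Proof. unfold fz. change (fib (S (S k))) with (fib (S k) + fib k)%nat. lia. Qed.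
Lemma fz0 : fz 0 = 0%Z. Proof. reflexivity. Qed.
Lemma fz1 : fz 1 = 1%Z. Proof. reflexivity. Qed.
Lemma fz_nonneg k : (0 <= fz k)%Z. Proof. unfold fz; lia. Qed.
Lemma fz_pos k : (1 <= fz (S k))%Z.
Proof. induction k. reflexivity. rewrite fz_rec. pose proof (fz_nonneg k). lia. Qed.
Lemma fz_mono k : (fz k <= fz (S k))%Z.
Proof. destruct k. rewrite fz0; pose proof (fz_nonneg 1); lia.
  rewrite fz_rec. pose proof (fz_nonneg k). lia. Qed.

Definition D i j := (fz (S i) * fz (i+j) - fz i * fz (S (i+j)))%Z.

Lemma D_S i j : D (S i) j = (- D i j)%Z.
Proof. unfold D. simpl (S i + j)%nat. rewrite (fz_rec i), (fz_rec (i+j)). ring. Qed.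

Lemma D_sign i j : D i j = (D i 1 * fz j)%Z.
Proof. induction i. unfold D; simpl. change (fz 1) with 1%Z. change (fz 0) with 0%Z. ring.
  rewrite !D_S, IHi. ring. Qed.

Lemma D_sq i : (D i 1 * D i 1 = 1)%Z.
Proof. induction i. reflexivity. rewrite D_S. lia. Qed.

Lemma BA i j y w : (1 <= y < fz (S (S i)))%Z ->
  (fz (S j) <= Z.abs (y * fz (i + S j) - w * fz (S (i + S j))))%Z.
Proof.
  intros Hy.
  set (s := D i 1).
  set (A := fz (S i)). set (B := fz (S (S i))). set (C := fz i).
  assert (HB : B = (A + C)%Z) by (unfold B, A, C; apply fz_rec).
  assert (Hs : (A*A - C*B)%Z = s).
  { unfold s, D, A, B, C. replace (i+1)%nat with (S i) by lia. ring. }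
  assert (Hs2 : (s*s = 1)%Z) by apply D_sq.
  assert (HyB : (1 <= y < A + C)%Z) by (pose proof (fz_rec i); unfold A, C; lia).
  clear Hy.
  set (fm := fz (i + S j)). set (fm1 := fz (S (i + S j))).
  assert (He1 : (A*fm - C*fm1 = s * fz (S j))%Z).
  { unfold s. rewrite <- D_sign. unfold D. reflexivity. }
  assert (He2 : (B*fm - A*fm1 = - s * fz j)%Z).
  { unfold s. replace (- D i 1 * fz j)%Z with (D (S i) j).
    unfold D, fm, fm1, A, B. replace (S i + j)%nat with (i + S j)%nat by lia. reflexivity.
    rewrite D_S, D_sign. ring. }
  set (u := (s*(y*A - w*B))%Z). set (v := (s*(w*A - y*C))%Z).
  assert (Hyu : y = (u*A + v*B)%Z).
  { transitivity (y*(s*s))%Z. rewrite Hs2; ring. rewrite <- Hs at 2. unfold u, v. ring. }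
  assert (Hwu : w = (u*C + v*A)%Z).
  { transitivity (w*(s*s))%Z. rewrite Hs2; ring. rewrite <- Hs at 2. unfold u, v. ring. }
  assert (Ht : (y*fm - w*fm1 = s*(u * fz (S j) - v * fz j))%Z).
  { rewrite Hyu, Hwu. transitivity (u*(A*fm - C*fm1) + v*(B*fm - A*fm1))%Z. ring.
    rewrite He1, He2. ring. }
  rewrite Ht.
  assert (HA : (1 <= A)%Z) by apply fz_pos.
  assert (HC : (0 <= C)%Z) by apply fz_nonneg.
  pose proof (fz_pos j) as H1. pose proof (fz_nonneg j) as H0.
  clearbody u v fm fm1 A B C s.
  assert (Hsv : s = 1%Z \/ s = (-1)%Z) by (apply (Z.eq_mul_1 s s); exact Hs2).
  assert (Z.abs (s * (u * fz (S j) - v * fz j)) = Z.abs (u * fz (S j) - v * fz j))%Z.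
  { destruct Hsv as [E|E]; rewrite E. rewrite Z.mul_1_l; reflexivity. rewrite Z.abs_mul; simpl Z.abs; ring. }
  rewrite H. clear H Ht He1 He2 Hwu Hs Hsv Hs2.
  subst y.
  destruct (Z.lt_trichotomy u 0) as [Hu|[Hu|Hu]].
  - destruct (Z_le_gt_dec v 0).
    + assert (u*A <= -1)%Z by nia. assert (v*(A+C) <= 0)%Z by nia. lia.
    + assert (u * fz (S j) <= - fz (S j))%Z by nia. assert (0 <= v * fz j)%Z by nia. lia.
  - subst u. destruct (Z_le_gt_dec v 0).
    + assert (v*(A+C) <= 0)%Z by nia. lia.
    + assert (0 <= (v-1)*(A+C))%Z by (apply Z.mul_nonneg_nonneg; lia). lia.
  - destruct (Z_le_gt_dec v 0).
    + assert (u * fz (S j) >= fz (S j))%Z by nia. assert (v * fz j <= 0)%Z by nia. lia.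
    + assert (0 <= (u-1)*A)%Z by (apply Z.mul_nonneg_nonneg; lia). assert (0 <= (v-1)*(A+C))%Z by (apply Z.mul_nonneg_nonneg; lia). lia.
Qed.

Lemma find_i K t : (1 <= t < fz (S K))%Z ->
  exists i, (i < K)%nat /\ (fz (S i) <= t < fz (S (S i)))%Z.
Proof.
  induction K; intros H. change (fz 1) with 1%Z in H. lia.
  destruct (Z_lt_le_dec t (fz (S K))).
  - destruct IHK as [i [Hi Ht]]. lia. exists i; split; [lia|exact Ht].
  - exists K. split; [lia|lia].
Qed.

Lemma prod_fib i : forall j, (fz (i+j) <= fz (S i) * fz (S j))%Z.
Proof.
  assert (forall i, (forall j, fz (i+j) <= fz (S i) * fz (S j))%Z /\
                    (forall j, fz (S i+j) <= fz (S (S i)) * fz (S j))%Z).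
  { induction i0.
    - split; intros j.
      + change (0 + j)%nat with j. change (fz 1) with 1%Z. pose proof (fz_mono j). lia.
      + change (1 + j)%nat with (S j). change (fz 2) with 1%Z. lia.
    - destruct IHi0 as [H1 H2]. split. exact H2.
      intros j. change (S (S i0) + j)%nat with (S (S (i0 + j))). rewrite fz_rec. rewrite (fz_rec (S i0)).
      specialize (H1 j). specialize (H2 j). change (S i0 + j)%nat with (S (i0 + j)) in H2. nia. }
  apply H.
Qed.

Lemma core p t w : (1 <= Z.abs t)%Z -> (Z.abs t < fz (S (S p)))%Z ->
  (fz p <= Z.abs t * Z.abs (t * fz (S p) - w * fz (S (S p))))%Z.
Proof.
  intros H1 H2.
  assert (gen : forall t w, (1 <= t < fz (S (S p)))%Z ->
     (fz p <= t * Z.abs (t * fz (S p) - w * fz (S (S p))))%Z).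
  { clear t w H1 H2. intros t w Ht.
    destruct (find_i (S p) t Ht) as [i [Hi Hti]].
    destruct (Nat.le_exists_sub i p) as [j [Hj _]]. lia.
    assert (Hp : p = (i + j)%nat) by lia. 
    assert (Hb := BA i j t w ltac:(lia)).
    replace (i + S j)%nat with (S p) in Hb by lia.
    pose proof (prod_fib i j). rewrite <- Hp in H.
    pose proof (fz_pos j). pose proof (fz_pos i).
    assert (fz (S i) * fz (S j) <= t * Z.abs (t * fz (S p) - w * fz (S (S p))))%Z.
    { apply Z.mul_le_mono_nonneg; lia. }
    lia. }
  destruct (Z_le_gt_dec 0 t).
  - rewrite Z.abs_eq by lia. apply gen. lia.
  - rewrite Z.abs_neq by lia.
    replace (t * fz (S p) - w * fz (S (S p)))%Z with (- ((-t) * fz (S p) - (-w) * fz (S (S p))))%Z by ring.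
    rewrite Z.abs_opp. apply gen. lia.
Qed.

Lemma cassini p :
  (fz p*fz p - 3*fz p*fz (S (S p)) + fz (S (S p))*fz (S (S p)) = 1 \/
   fz p*fz p - 3*fz p*fz (S (S p)) + fz (S (S p))*fz (S (S p)) = -1)%Z.
Proof.
  pose proof (D_sq p). unfold D in H. replace (p+1)%nat with (S p) in H by lia.
  pose proof (fz_rec p).
  assert (E : (fz p*fz p - 3*fz p*fz (S (S p)) + fz (S (S p))*fz (S (S p)) = (fz (S p) * fz (S p) - fz p * fz (S (S p))))%Z).
  { rewrite H0. ring. }
  rewrite E. apply Z.eq_mul_1 in H. lia.
Qed.

Lemma dist_Z_int r : exists j : Z, dist_Z r = Rabs (r - IZR j) /\ dist_Z r <= 1/2.
Proof.
  unfold dist_Z, frac. destruct (base_Int_part r) as [H1 H2].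
  set (k := Int_part r) in *.
  unfold Rmin. destruct (Rle_dec (r - IZR k) (1 - (r - IZR k))).
  - exists k. split. rewrite Rabs_right; lra. lra.
  - exists (k+1)%Z. rewrite plus_IZR. split. rewrite Rabs_left; lra. lra.
Qed.

Lemma abs_lb T e : 0 <= e -> Rabs T - e <= Rabs (T + e).
Proof. intros. unfold Rabs; destruct (Rcase_abs T); destruct (Rcase_abs (T+e)); lra. Qed.

Lemma min_prod_ge alpha beta Q L : (2 <= Q)%nat ->
  (forall x, (1 <= x <= Q - 1)%nat -> L <= prod_dist alpha beta x) ->
  L <= min_prod alpha beta Q.
Proof.
  intros HQ H. unfold min_prod.
  assert (Hd : L <= prod_dist alpha beta 1) by (apply H; lia).
  assert (Hl : forall x, In x (seq 1 (Q-1)) -> L <= prod_dist alpha beta x).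
  { intros x Hx. apply in_seq in Hx. apply H. lia. }
  clear H. induction (seq 1 (Q-1)) as [|y l IH]; simpl. exact Hd.
  apply Rmin_glb. apply Hl; left; reflexivity. apply IH. intros x Hx; apply Hl; right; exact Hx.
Qed.

Lemma key (p : nat) (a : Z) (alpha beta d : R) :
  (1 <= a < fz (S (S p)))%Z -> Z.gcd a (fz (S (S p))) = 1%Z -> 0 <= d < 1 ->
  in_Icc (IZR a / INR (fib (S (S p)))) (d / (INR (fib (S (S p))))^2) alpha ->
  in_Icc (frac (INR (fib (S p)) * IZR a / INR (fib (S (S p))))) (d / (INR (fib (S (S p))))^2) beta ->
  forall x, (1 <= x <= fib (S (S p)) - 1)%nat ->
  (1-d)^2 * IZR (fz p) / (INR (fib (S (S p))))^2 <= prod_dist alpha beta x.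
Proof.
  intros Ha Hg Hd HIa HIb x Hx.
  unfold in_Icc in *.
  set (FZ := fz (S (S p))) in *.
  assert (HF : INR (fib (S (S p))) = IZR FZ) by (unfold FZ, fz; apply INR_IZR_INZ).
  assert (HFm : INR (fib (S p)) = IZR (fz (S p))) by (unfold fz; apply INR_IZR_INZ).
  rewrite HF, HFm in *.
  set (Fr := IZR FZ) in *.
  assert (HFZ2 : (2 <= FZ)%Z) by lia.
  assert (HFr : 2 <= Fr) by (unfold Fr; apply IZR_le; lia).
  assert (Hp : (1 <= fz p)%Z).
  { destruct p. unfold FZ in HFZ2. change (fz 2) with 1%Z in HFZ2. lia. apply fz_pos. }
  set (X := Z.of_nat x).
  assert (HX : INR x = IZR X) by apply INR_IZR_INZ.
  assert (HXb : (1 <= X <= FZ - 1)%Z).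
  { unfold X, FZ, fz. lia. }
  assert (HXr : 1 <= IZR X <= Fr - 1).
  { split. apply IZR_le; lia. unfold Fr. rewrite <- minus_IZR. apply IZR_le; lia. }
  unfold prod_dist. rewrite HX.
  destruct (dist_Z_int (alpha * IZR X)) as [j1 [E1 B1]].
  destruct (dist_Z_int (beta * IZR X)) as [j2 [E2 B2]].
  set (fm := fz (S p)) in *.
  set (k0 := Int_part (IZR fm * IZR a / Fr)).
  assert (Efr : frac (IZR fm * IZR a / Fr) = IZR fm * IZR a / Fr - IZR k0) by reflexivity.
  rewrite Efr in HIb.
  set (phi1 := Fr * alpha - IZR a).
  set (phi2 := Fr * beta - (IZR fm * IZR a - IZR k0 * Fr)).
  assert (Eq1 : Fr * (IZR a / Fr) = IZR a) by (field; lra).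
  assert (Eq2 : Fr * (d / Fr^2) = d / Fr) by (field; lra).
  assert (Eq3 : Fr * (IZR fm * IZR a / Fr - IZR k0) = IZR fm * IZR a - IZR k0 * Fr) by (field; lra).
  assert (Hdf : 0 <= d / Fr) by (apply Rmult_le_pos; [lra | left; apply Rinv_0_lt_compat; lra]).
  assert (Hdf2 : d / Fr * IZR X <= d).
  { replace d with (d / Fr * Fr) at 2 by (field; lra). apply Rmult_le_compat_l; lra. }
  assert (Hphi1 : 0 <= phi1 <= d / Fr).
  { unfold phi1. destruct HIa as [L U].
    apply (Rmult_le_compat_l Fr) in L; [|lra]. apply (Rmult_le_compat_l Fr) in U; [|lra].
    rewrite Rmult_plus_distr_l in U. lra. }
  assert (Hphi2 : 0 <= phi2 <= d / Fr).
  { unfold phi2. destruct HIb as [L U].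
    apply (Rmult_le_compat_l Fr) in L; [|lra]. apply (Rmult_le_compat_l Fr) in U; [|lra].
    rewrite Rmult_plus_distr_l in U. lra. }
  assert (Hp1X : 0 <= phi1 * IZR X <= d).
  { split. apply Rmult_le_pos; lra. apply Rle_trans with (d / Fr * IZR X); [|lra].
    apply Rmult_le_compat_r; lra. }
  assert (Hp2X : 0 <= phi2 * IZR X <= d).
  { split. apply Rmult_le_pos; lra. apply Rle_trans with (d / Fr * IZR X); [|lra].
    apply Rmult_le_compat_r; lra. }
  set (t := (a * X - j1 * FZ)%Z).
  set (s := ((fm * a - k0 * FZ) * X - j2 * FZ)%Z).
  assert (Et : Fr * (alpha * IZR X - IZR j1) = IZR t + phi1 * IZR X).
  { unfold t, phi1, Fr. rewrite minus_IZR, !mult_IZR. ring. }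
  assert (Es : Fr * (beta * IZR X - IZR j2) = IZR s + phi2 * IZR X).
  { unfold s, phi2, Fr. rewrite minus_IZR, !mult_IZR, minus_IZR, !mult_IZR. ring. }
  assert (D1 : Fr * dist_Z (alpha * IZR X) = Rabs (IZR t + phi1 * IZR X)).
  { rewrite E1, <- Et, Rabs_mult, (Rabs_right Fr) by lra. reflexivity. }
  assert (D2 : Fr * dist_Z (beta * IZR X) = Rabs (IZR s + phi2 * IZR X)).
  { rewrite E2, <- Es, Rabs_mult, (Rabs_right Fr) by lra. reflexivity. }
  assert (Ht_lt : (Z.abs t < FZ)%Z).
  { apply lt_IZR. rewrite abs_IZR.
    pose proof (abs_lb (IZR t) (phi1 * IZR X) ltac:(lra)).
    assert (Fr * dist_Z (alpha * IZR X) <= Fr * (1/2)) by (apply Rmult_le_compat_l; lra).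
    fold Fr. lra. }
  assert (Ht0 : t <> 0%Z).
  { intros E. unfold t in E.
    assert (Hdv : (FZ | a * X)%Z) by (exists j1; lia).
    apply Z.gauss in Hdv. apply Z.divide_pos_le in Hdv; lia.
    rewrite Z.gcd_comm; exact Hg. }
  set (w := (k0 * X + j2 - fm * j1)%Z).
  assert (Esw : s = (t * fm - w * FZ)%Z) by (unfold s, t, w; ring).
  pose proof (core p t w ltac:(lia) Ht_lt) as Hc.
  fold fm FZ in Hc. rewrite <- Esw in Hc.
  assert (Hs1 : (1 <= Z.abs s)%Z).
  { destruct (Z.eq_dec s 0) as [E|E]. rewrite E in Hc. simpl in Hc. lia. lia. }
  assert (HT1 : 1 <= Rabs (IZR t)) by (rewrite <- abs_IZR; apply IZR_le; lia).
  assert (HS1 : 1 <= Rabs (IZR s)) by (rewrite <- abs_IZR; apply IZR_le; lia).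
  assert (L1 : (1-d) * Rabs (IZR t) <= Fr * dist_Z (alpha * IZR X)).
  { rewrite D1. pose proof (abs_lb (IZR t) (phi1 * IZR X) ltac:(lra)). nra. }
  assert (L2 : (1-d) * Rabs (IZR s) <= Fr * dist_Z (beta * IZR X)).
  { rewrite D2. pose proof (abs_lb (IZR s) (phi2 * IZR X) ltac:(lra)). nra. }
  assert (Hc' : IZR (fz p) <= Rabs (IZR t) * Rabs (IZR s)).
  { rewrite <- !abs_IZR, <- mult_IZR. apply IZR_le. exact Hc. }
  apply (Rmult_le_reg_l (Fr^2)). nra.
  replace (Fr ^ 2 * ((1 - d) ^ 2 * IZR (fz p) / Fr ^ 2)) with ((1-d)^2 * IZR (fz p)) by (field; lra).
  replace (Fr ^ 2 * (dist_Z (alpha * IZR X) * dist_Z (beta * IZR X))) with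
    ((Fr * dist_Z (alpha * IZR X)) * (Fr * dist_Z (beta * IZR X))) by ring.
  apply Rle_trans with (((1-d) * Rabs (IZR t)) * ((1-d) * Rabs (IZR s))).
  - replace ((1 - d) * Rabs (IZR t) * ((1 - d) * Rabs (IZR s))) with ((1-d)^2 * (Rabs (IZR t) * Rabs (IZR s))) by ring.
    apply Rmult_le_compat_l. nra. exact Hc'.
  - apply Rmult_le_compat; try nra.
Qed.

Lemma fib_ge k : (k <= fib (S k))%nat /\ (S k <= fib (S (S k)))%nat.
Proof.
  induction k. simpl; lia.
  destruct IHk as [H1 H2]. split. exact H2.
  change (fib (S (S (S k)))) with (fib (S (S k)) + fib (S k))%nat.
  pose proof (fz_pos k). unfold fz in H. lia.
Qed.

Lemma ratio_lb (x y : R) : 1 <= y -> 0 <= x ->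
  (x*x - 3*x*y + y*y = 1 \/ x*x - 3*x*y + y*y = -1) ->
  (3 - sqrt 5)/2 - 1/(y*y) <= x / y.
Proof.
  intros Hy Hx Hc.
  pose proof (sqrt_sqrt 5 ltac:(lra)) as Hs. pose proof (sqrt_pos 5) as Hs0.
  set (s := sqrt 5) in *.
  assert (Hs2 : 2 <= s) by nra.
  set (r := x / y).
  assert (Hr : r*r - 3*r + 1 <= 1/(y*y)).
  { assert (E : r*r - 3*r + 1 = (x*x - 3*x*y + y*y) / (y*y)) by (unfold r; field; lra).
    rewrite E. unfold Rdiv. apply Rmult_le_compat_r.
    left; apply Rinv_0_lt_compat; nra. lra. }
  destruct (Rle_dec ((3 - s)/2) r). 
  - assert (0 <= 1/(y*y)) by (unfold Rdiv; rewrite Rmult_1_l; left; apply Rinv_0_lt_compat; nra). lra.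
  - assert (E2 : r*r - 3*r + 1 = ((3-s)/2 - r) * ((3+s)/2 - r)) by (replace (((3-s)/2 - r) * ((3+s)/2 - r)) with ((9 - s*s)/4 - 3*r + r*r) by field; rewrite Hs; field).
    assert (((3-s)/2 - r) * 1 <= ((3-s)/2 - r) * ((3+s)/2 - r)) by (apply Rmult_le_compat_l; lra).
    lra.
Qed.

Lemma n_ge (n : nat -> nat) : (forall nu, (1 <= n nu)%nat) -> (forall nu, (n nu < n (S nu))%nat) ->
  forall nu, (S nu <= n nu)%nat.
Proof. intros H1 H2 nu. induction nu. apply H1. specialize (H2 nu). lia. Qed.

Theorem theorem1
  (delta : nat -> R) (n : nat -> nat) (a : nat -> Z) (alpha beta : R)
  (hdelta_pos : forall nu, 0 < delta nu)
  (hdelta_lim : is_lim_seq delta 0)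
  (hn_pos : forall nu, (1 <= n nu)%nat)
  (hn_incr : forall nu, (n nu < n (S nu))%nat)
  (ha_ge : forall nu, (1 <= a nu)%Z)
  (ha_lt : forall nu, (a nu < Z.of_nat (fib (n nu)))%Z)
  (ha_gcd : forall nu, Z.gcd (a nu) (Z.of_nat (fib (n nu))) = 1%Z)
  (hI : forall nu x,
      in_Icc (IZR (a (S nu)) / INR (fib (n (S nu))))
             (delta (S nu) / (INR (fib (n (S nu))))^2) x ->
      in_Icc (IZR (a nu) / INR (fib (n nu)))
             (delta nu / (INR (fib (n nu)))^2) x)
  (hJ : forall nu x,
      in_Icc (frac (INR (fib (n (S nu) - 1)) * IZR (a (S nu)) / INR (fib (n (S nu)))))
             (delta (S nu) / (INR (fib (n (S nu))))^2) x ->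
      in_Icc (frac (INR (fib (n nu - 1)) * IZR (a nu) / INR (fib (n nu))))
             (delta nu / (INR (fib (n nu)))^2) x)
  (halpha : forall x,
      (forall nu, in_Icc (IZR (a nu) / INR (fib (n nu)))
                         (delta nu / (INR (fib (n nu)))^2) x) <-> x = alpha)
  (hbeta : forall x,
      (forall nu, in_Icc (frac (INR (fib (n nu - 1)) * IZR (a nu) / INR (fib (n nu))))
                         (delta nu / (INR (fib (n nu)))^2) x) <-> x = beta) :
  Rbar_le (Finite (2 / (3 + sqrt 5)))
          (LimSup_seq (fun Q : nat => INR Q * min_prod alpha beta Q)).
Proof.
  pose proof (sqrt_sqrt 5 ltac:(lra)) as Hs. pose proof (sqrt_pos 5) as Hs0.
  assert (Hs2 : 2 <= sqrt 5) by nra.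
  assert (Hc : 2 / (3 + sqrt 5) = (3 - sqrt 5)/2).
  { replace 2 with ((3 - sqrt 5)/2 * (3 + sqrt 5)) at 1.
    field. lra.
    replace ((3 - sqrt 5)/2 * (3 + sqrt 5)) with ((9 - sqrt 5 * sqrt 5)/2) by field.
    rewrite Hs. field. }
  rewrite Hc. set (c := (3 - sqrt 5)/2).
  set (u := fun Q : nat => INR Q * min_prod alpha beta Q).
  assert (Hinf : forall eps, 0 < eps -> forall M, exists Q, (M <= Q)%nat /\ c - eps < u Q).
  { intros eps Heps M.
    apply is_lim_seq_spec in hdelta_lim.
    assert (He' : 0 < Rmin (eps/4) (1/2)) by (apply Rmin_glb_lt; lra).
    destruct (hdelta_lim (mkposreal _ He')) as [N0 HN0]. simpl in HN0.
    destruct (nfloor_ex (4/eps)) as [K HK]. left; apply Rdiv_lt_0_compat; lra.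
    set (nu := (N0 + M + K + 2)%nat).
    specialize (HN0 nu ltac:(unfold nu; lia)).
    rewrite Rminus_0_r in HN0.
    pose proof (Rmin_l (eps/4) (1/2)). pose proof (Rmin_r (eps/4) (1/2)).
    pose proof (hdelta_pos nu) as Hdp.
    rewrite Rabs_right in HN0 by lra.
    assert (Hnu := n_ge n hn_pos hn_incr nu).
    pose proof (halpha alpha) as HA. destruct HA as [_ HA]. specialize (HA eq_refl nu).
    pose proof (hbeta beta) as HB. destruct HB as [_ HB]. specialize (HB eq_refl nu).
    pose proof (ha_ge nu) as Ha1. pose proof (ha_lt nu) as Ha2. pose proof (ha_gcd nu) as Hg.
    clear halpha hbeta hI hJ.
    remember (n nu) as N eqn:HN.
    destruct N as [|[|p]].
    - simpl in Ha2. lia.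
    - simpl in Ha2. lia.
    - assert (Hk := key p (a nu) alpha beta (delta nu) ltac:(unfold fz; lia) Hg ltac:(lra) HA).
      replace (S (S p) - 1)%nat with (S p) in HB by lia.
      specialize (Hk HB).
      pose proof (fib_ge (S p)) as [Hf1 _].
      exists (fib (S (S p))). split. unfold nu in Hnu. lia.
      assert (Hmin := min_prod_ge alpha beta (fib (S (S p))) _ ltac:(unfold fz in *; lia) Hk).
      unfold u.
      set (d := delta nu) in *.
      assert (HF : INR (fib (S (S p))) = IZR (fz (S (S p)))) by (unfold fz; apply INR_IZR_INZ).
      rewrite HF in *. set (Fr := IZR (fz (S (S p)))) in *.
      assert (HFK : 4/eps < Fr).
      { rewrite <- HF. apply Rlt_le_trans with (INR K + 1). lra.
        rewrite <- S_INR. apply le_INR. unfold nu in Hnu. lia. }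
      assert (HFr1 : 1 <= Fr).
      { unfold Fr. apply IZR_le. apply fz_pos. }
      assert (Hinv : 1/Fr < eps/4).
      { apply Rmult_lt_reg_r with (4 * Fr / eps). apply Rdiv_lt_0_compat; lra.
        replace (1 / Fr * (4 * Fr / eps)) with (4/eps) by (field; lra).
        replace (eps / 4 * (4 * Fr / eps)) with Fr by (field; lra). lra. }
      set (x := IZR (fz p)).
      assert (Hx0 : 0 <= x) by (unfold x; apply IZR_le; apply fz_nonneg).
      assert (HxF : x <= Fr).
      { unfold x, Fr. apply IZR_le. rewrite fz_rec. pose proof (fz_rec p).
        pose proof (fz_nonneg (S p)). pose proof (fz_nonneg p). lia. }
      assert (Hcas : x*x - 3*x*Fr + Fr*Fr = 1 \/ x*x - 3*x*Fr + Fr*Fr = -1).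
      { unfold x, Fr. destruct (cassini p) as [E|E]; [left|right];
        apply (f_equal IZR) in E; rewrite !plus_IZR, !minus_IZR, !mult_IZR in E; lra. }
      pose proof (ratio_lb x Fr HFr1 Hx0 Hcas) as Hr. fold c in Hr.
      assert (Hr1 : x / Fr <= 1).
      { apply Rmult_le_reg_r with Fr. lra. replace (x / Fr * Fr) with x by (field; lra). lra. }
      assert (Hr0 : 0 <= x / Fr) by (apply Rmult_le_pos; [lra | left; apply Rinv_0_lt_compat; lra]).
      assert (Hyy : 1/(Fr*Fr) <= 1/Fr).
      { unfold Rdiv. rewrite !Rmult_1_l. apply Rinv_le_contravar. lra. nra. }
      assert (Hu : (1-d)^2 * (x / Fr) <= Fr * min_prod alpha beta (fib (S (S p)))).
      { apply Rle_trans with (Fr * ((1 - d) ^ 2 * x / Fr ^ 2)).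
        right. field. lra.
        apply Rmult_le_compat_l. lra. exact Hmin. }
      assert (Hc1 : c <= 1) by (unfold c; lra).
      assert ((1 - 2*d) * (x/Fr) <= (1-d)^2 * (x / Fr)) by (apply Rmult_le_compat_r; nra).
      nra. }
  destruct (ex_LimSup_seq u) as [l Hl]. rewrite (is_LimSup_seq_unique _ _ Hl).
  destruct l as [l| |]; simpl.
  - destruct (Rle_dec c l) as [H|H]. exact H. exfalso.
    assert (He : 0 < (c - l)/2) by lra.
    destruct (Hl (mkposreal _ He)) as [_ [N HN]]. simpl in HN.
    destruct (Hinf _ He N) as [Q [HQ1 HQ2]]. specialize (HN Q HQ1). lra.
  - exact I.
  - destruct (Hl (c - 1)) as [N HN].
    destruct (Hinf 1 ltac:(lra) N) as [Q [HQ1 HQ2]]. specialize (HN Q HQ1). lra.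
Qed.
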